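(* Let $(\mathcal{P},\cdot)$ be a finite-dimensional simple admissible Poisson algebra which is not a nilalgebra. Then $\mathcal{P}$ has a unit element $1$ (with $1\cdot x=x\cdot 1=x$ for all $x$).
   Context: $\mathbb{K}$ is a field of characteristic different from $2$ and $3$. Associator: $A(X,Y,Z)=(X\cdot Y)\cdot Z-X\cdot(Y\cdot Z)$. An admissible Poisson algebra is a $\mathbb{K}$-vector space $\mathcal{P}$ with a bilinear product $\cdot$ satisfying $3A(X,Y,Z)=(X\cdot Z)\cdot Y+(Y\cdot Z)\cdot X-(Y\cdot X)\cdot Z-(Z\cdot X)\cdot Y$ for all $X,Y,Z$. $\mathcal{P}$ is simple if it has no two-sided ideals other than $\{0\}$ and $\mathcal{P}$, and $\mathcal{P}\cdot\mathcal{P}\neq\{0\}$. Powers: $X^1=X$, $X^{i+1}=X\cdot X^i$; $\mathcal{P}$ is a nilalgebra if every $X$ satisfies $X^r=0$ for some $r$. *)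

(* Defs.v *)
From HB Require Import structures.
From mathcomp Require Import all_boot all_order all_algebra.
Set Implicit Arguments. Unset Strict Implicit. Unset Printing Implicit Defensive.
Import GRing.Theory.
Local Open Scope ring_scope.

Section AdmPoisson.
Variables (K : fieldType) (V : vectType K) (mul : V -> V -> V).

Definition bilinear_prod : Prop :=
  (forall (a : K) (x y z : V), mul (a *: x + y) z = a *: mul x z + mul y z) /\
  (forall (a : K) (x y z : V), mul z (a *: x + y) = a *: mul z x + mul z y).

Definition assoc (x y z : V) : V := mul (mul x y) z - mul x (mul y z).

Definition admissible_poisson : Prop :=
  forall x y z : V,
    3%:R *: assoc x y z =
      mul (mul x z) y + mul (mul y z) x - mul (mul y x) z - mul (mul z x) y.

Definition two_sided_ideal (I : {vspace V}) : Prop :=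
  forall x y : V, x \in I -> mul x y \in I /\ mul y x \in I.

Definition simple_alg : Prop :=
  (forall I : {vspace V}, two_sided_ideal I -> I = 0%VS \/ I = fullv) /\
  (exists x y : V, mul x y != 0).

(* ppow x n = X^(n+1), with X^1 = X and X^(i+1) = X . X^i *)
Fixpoint ppow (x : V) (n : nat) : V :=
  match n with
  | O => x
  | S n' => mul x (ppow x n')
  end.

Definition nilalgebra : Prop := forall x : V, exists n : nat, ppow x n = 0.

Definition is_unit_element (e : V) : Prop :=
  forall x : V, mul e x = x /\ mul x e = x.

End AdmPoisson.

(* Main.v *)
Require Import Defs.
From HB Require Import structures.
From mathcomp Require Import all_boot all_order all_algebra.
From mathcomp Require Import ring.
From Stdlib Require Import Classical.
Set Implicit Arguments. Unset Strict Implicit. Unset Printing Implicit Defensive.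
Import GRing.Theory.
Local Open Scope ring_scope.

Section S.
Variables (K : fieldType) (V : vectType K) (mul : V -> V -> V).
Hypotheses (h2 : (2%:R : K) != 0) (h3 : (3%:R : K) != 0)
  (hb : bilinear_prod mul) (ha : admissible_poisson mul).

Lemma mulDl x y z : mul (x + y) z = mul x z + mul y z.
Proof. by have := (proj1 hb) 1 x y z; rewrite !scale1r. Qed.
Lemma mulDr x y z : mul z (x + y) = mul z x + mul z y.
Proof. by have := (proj2 hb) 1 x y z; rewrite !scale1r. Qed.
Lemma mul0l z : mul 0 z = 0.
Proof. have H := mulDl 0 0 z; rewrite addr0 in H.
by apply: (@addrI _ (mul 0 z)); rewrite addr0 -H. Qed.
Lemma mul0r z : mul z 0 = 0.
Proof. have H := mulDr 0 0 z; rewrite addr0 in H.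
by apply: (@addrI _ (mul z 0)); rewrite addr0 -H. Qed.
Lemma mulZl a x z : mul (a *: x) z = a *: mul x z.
Proof. by have := (proj1 hb) a x 0 z; rewrite !addr0 mul0l addr0. Qed.
Lemma mulZr a x z : mul z (a *: x) = a *: mul z x.
Proof. by have := (proj2 hb) a x 0 z; rewrite !addr0 mul0r addr0. Qed.
Lemma mulNl x z : mul (- x) z = - mul x z.
Proof. by rewrite -scaleN1r mulZl scaleN1r. Qed.
Lemma mulNr x z : mul z (- x) = - mul z x.
Proof. by rewrite -scaleN1r mulZr scaleN1r. Qed.
Lemma mulBl x y z : mul (x - y) z = mul x z - mul y z.
Proof. by rewrite mulDl mulNl. Qed.
Lemma mulBr x y z : mul z (x - y) = mul z x - mul z y.
Proof. by rewrite mulDr mulNr. Qed.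

Definition phi (i : 'I_(\dim (@fullv K V))) : V -> K := coord (vbasis fullv) i.

Lemma ext (u w : V) : (forall i, phi i u = phi i w) -> u = w.
Proof.
move=> H; rewrite (coord_vbasis (memvf u)) (coord_vbasis (memvf w)).
by apply: eq_bigr => i _; rewrite -/(phi i u) H.
Qed.

Ltac pushphi := rewrite /phi ?(linearD, linearB, linearN, linearZ, linear0) /=.

Lemma lc1 (L R l r c : K) : l = r -> L - R = c * (l - r) -> L = R.
Proof. move=> -> h; apply/eqP; rewrite -subr_eq0 h subrr mulr0 //. Qed.

Lemma rbr x y z : mul x (mul y z) =
  (3%:R : K)^-1 *: (3%:R *: mul (mul x y) z - mul (mul x z) y - mul (mul y z) x
     + mul (mul y x) z + mul (mul z x) y).
Proof.
have := ha x y z; rewrite /assoc => H.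
apply: ext => i; move: (congr1 (phi i) H); pushphi => E.
pushphi. apply: (lc1 (c := - 3%:R^-1) E). by field.
Qed.

Definition C x y := (2%:R : K)^-1 *: (mul x y + mul y x).
Definition B x y := (2%:R : K)^-1 *: (mul x y - mul y x).

Ltac expand := rewrite /C /B ?(mul0l, mul0r, mulDl, mulDr, mulBl, mulBr, mulZl, mulZr, mulNl, mulNr).

Lemma CA x y z : C (C x y) z = C x (C y z).
Proof. expand; rewrite ?rbr; apply: ext => i; pushphi. by field; rewrite ?h2 ?h3. Qed.

Lemma Leib x y z : B x (C y z) = C (B x y) z + C y (B x z).
Proof. expand; rewrite ?rbr; apply: ext => i; pushphi; by field; rewrite ?h2 ?h3. Qed.

Ltac vsolve := expand; apply: ext => ?; pushphi; by field; rewrite ?h2 ?h3.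

Lemma CC x y : C x y = C y x. Proof. vsolve. Qed.
Lemma BN x y : B x y = - B y x. Proof. vsolve. Qed.
Lemma Bxx x : B x x = 0. Proof. vsolve. Qed.
Lemma mulE x y : mul x y = C x y + B x y. Proof. vsolve. Qed.
Lemma CDr x y z : C z (x + y) = C z x + C z y. Proof. vsolve. Qed.
Lemma C0l x : C 0 x = 0. Proof. vsolve. Qed.
Lemma C0r x : C x 0 = 0. Proof. vsolve. Qed.
Lemma B0r x : B x 0 = 0. Proof. vsolve. Qed.
Lemma CNB x y z : C x (B y z) = - C x (B z y). Proof. vsolve. Qed.

Lemma ppS x n : ppow mul x n.+1 = mul x (ppow mul x n). Proof. by []. Qed.

Lemma P1 x n : B x (ppow mul x n) = 0.
Proof.
elim: n => [|n IH]; first exact: Bxx.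
by rewrite ppS mulE IH addr0 Leib Bxx IH C0l C0r addr0.
Qed.

Lemma ppSC x n : ppow mul x n.+1 = C x (ppow mul x n).
Proof. by rewrite ppS mulE P1 addr0. Qed.

Lemma P2 x m n : B (ppow mul x m) (ppow mul x n) = 0.
Proof.
elim: n => [|n IH]; first by rewrite /= BN P1 oppr0.
by rewrite ppSC Leib IH C0r BN P1 oppr0 C0l addr0.
Qed.

Lemma P3 x m n : mul (ppow mul x m) (ppow mul x n) = ppow mul x (m + n).+1.
Proof.
elim: m n => [|m IH] n; first by [].
rewrite mulE P2 addr0 ppSC CA -[C (ppow mul x m) _]addr0 -(P2 x m n) -mulE IH.
by rewrite -ppSC addSn.
Qed.

Lemma mul_sumr z I (r : seq I) (P : pred I) (F : I -> V) :
  mul z (\sum_(i <- r | P i) F i) = \sum_(i <- r | P i) mul z (F i).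
Proof. exact: (big_morph (mul z) (fun u v => mulDr u v z) (mul0r z)). Qed.
Lemma mul_suml z I (r : seq I) (P : pred I) (F : I -> V) :
  mul (\sum_(i <- r | P i) F i) z = \sum_(i <- r | P i) mul (F i) z.
Proof. exact: (big_morph (mul^~ z) (fun u v => mulDl u v z) (mul0l z)). Qed.

Definition ev (x : V) (p : {poly K}) : V :=
  \sum_(i < size p) p`_i *: ppow mul x i.

Lemma ev_widen x n (p : {poly K}) : leq (size p) n -> ev x p = \sum_(i < n) p`_i *: ppow mul x i.
Proof.
move=> hn; rewrite /ev (big_ord_widen n (fun i => p`_i *: ppow mul x i) hn).
rewrite big_mkcond; apply: eq_bigr => i _; case: ifP => // /negbT.
by rewrite -leqNgt => h; rewrite nth_default // scale0r.
Qed.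

Lemma ev_lin x a (p q : {poly K}) : ev x (a *: p + q) = a *: ev x p + ev x q.
Proof.
set n := maxn (size p) (size q).
have hp : leq (size p) n by rewrite leq_maxl.
have hq : leq (size q) n by rewrite leq_maxr.
have hpq : leq (size (a *: p + q)) n.
  apply: leq_trans (size_polyD _ _) _; rewrite geq_max hq andbT.
  exact: leq_trans (size_scale_leq _ _) hp.
rewrite (ev_widen x hp) (ev_widen x hq) (ev_widen x hpq) scaler_sumr -big_split /=.
by apply: eq_bigr => i _; rewrite coefD coefZ scalerDl scalerA.
Qed.

Lemma ev0 x : ev x 0 = 0.
Proof. by rewrite /ev size_poly0 big_ord0. Qed.
Lemma ev_add x (p q : {poly K}) : ev x (p + q) = ev x p + ev x q.
Proof. by have := ev_lin x 1 p q; rewrite !scale1r. Qed.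
Lemma ev_scale x a (p : {poly K}) : ev x (a *: p) = a *: ev x p.
Proof. by have := ev_lin x a p 0; rewrite !addr0 ev0 addr0. Qed.
Lemma ev_sub x (p q : {poly K}) : ev x (p - q) = ev x p - ev x q.
Proof. by have := ev_lin x (-1) q p; rewrite !scaleN1r addrC [_ + ev x p]addrC. Qed.
Lemma ev_sum x I (r : seq I) (P : pred I) (F : I -> {poly K}) :
  ev x (\sum_(i <- r | P i) F i) = \sum_(i <- r | P i) ev x (F i).
Proof. exact: (big_morph (ev x) (ev_add x) (ev0 x)). Qed.

Lemma evX x (r : {poly K}) : ev x ('X * r) = mul x (ev x r).
Proof.
have hs : leq (size ('X * r)) (size r).+1.
  by apply: leq_trans (size_mul_leq _ _) _; rewrite size_polyX.
rewrite (ev_widen x hs) big_ord_recl coefXM eqxx scale0r add0r /ev mul_sumr.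
by apply: eq_bigr => i _; rewrite coefXM /= mulZr.
Qed.

Lemma evXn x n (q : {poly K}) : ev x ('X^n * q) = \sum_(j < size q) q`_j *: ppow mul x (j + n).
Proof.
elim: n => [|n IH]; first by rewrite expr0 mul1r /ev; apply: eq_bigr => j _; rewrite addn0.
rewrite exprS -mulrA evX IH mul_sumr; apply: eq_bigr => j _.
by rewrite mulZr addnS.
Qed.

Lemma mulpev x i (q : {poly K}) : mul (ppow mul x i) (ev x q) = ev x ('X^(i.+1) * q).
Proof.
rewrite evXn /ev mul_sumr; apply: eq_bigr => j _.
by rewrite mulZr P3 addnS addnC.
Qed.

Lemma ev_mul x (p q : {poly K}) : mul (ev x p) (ev x q) = ev x ('X * p * q).
Proof.
have -> : 'X * p * q = \sum_(i < size p) p`_i *: ('X^(i.+1) * q).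
  rewrite -[p in 'X * p]coefK poly_def mulr_sumr mulr_suml.
  by apply: eq_bigr => i _; rewrite -scalerAr -scalerAl exprS.
rewrite ev_sum {1}/ev mul_suml; apply: eq_bigr => i _.
by rewrite mulZl mulpev ev_scale.
Qed.

Lemma evZ x (p s : {poly K}) : ev x p = 0 -> ev x (p * s) = 0.
Proof.
move=> h.
have hj : forall j, ev x ('X^j * p) = 0.
  by elim=> [|j IH]; rewrite ?expr0 ?mul1r // exprS -mulrA evX IH mul0r.
rewrite mulrC -[s]coefK poly_def mulr_suml ev_sum big1 // => i _.
by rewrite -scalerAl ev_scale hj scaler0.
Qed.

Lemma evXk x k : ev x 'X^k = ppow mul x k.
Proof. by rewrite -['X^k]mulr1 evXn size_poly1 big_ord1 coef1 eqxx scale1r. Qed.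

Lemma exists_rel x : exists q : {poly K}, q != 0 /\ ev x q = 0.
Proof.
set n := \dim (@fullv K V).
set T := [tuple ppow mul x i | i < n.+1].
have nfree : ~~ free T.
  rewrite /free size_tuple; apply/negP => /eqP h.
  have := dimvS (subvf (span T)); rewrite h dimvf /n -dimvf ltnn.
  by [].
have : ~ (forall k : 'I_n.+1 -> K, \sum_(i < n.+1) k i *: T`_i = 0 -> forall i, k i = 0).
  by move=> H; move/negP: nfree; apply; apply/freeP.
move=> H; have [k Hk] := not_all_ex_not _ _ H.
have [hs hk] := imply_to_and _ _ Hk.
have [i0 hi0] := not_all_ex_not _ _ hk.
exists (\poly_(i < n.+1) k (inord i)); split.
  apply/negP => /eqP /(congr1 (fun p : {poly K} => p`_i0)).
  by rewrite coef_poly ltn_ord inord_val coef0.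
rewrite (ev_widen x (size_poly _ _)) -[RHS]hs; apply: eq_bigr => i _.
by rewrite coef_poly ltn_ord inord_val nth_mktuple.
Qed.

Lemma Xfac (p : {poly K}) : p`_0 = 0 -> p = 'X * drop_poly 1 p.
Proof.
move=> h0; apply/polyP => i; rewrite coefXM.
by case: i => [|i] //=; rewrite coef_drop_poly addn1.
Qed.

Lemma strip n : forall q : {poly K}, (size q < n)%N -> q != 0 ->
  exists k r, q = 'X^k * r /\ r`_0 != 0.
Proof.
elim: n => // n IH q hs hq.
case: (eqVneq q`_0 0) => h0; last by exists 0%N, q; rewrite expr0 mul1r.
have hq' := Xfac h0; set d := drop_poly 1 q in hq'.
have hd : d != 0 by apply: contraNneq hq => hd; rewrite hq' hd mulr0.
have hsd : (size d < n)%N.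
  rewrite /d size_drop_poly; move: hs; rewrite -size_poly_gt0 in hq.
  by case: (size q) hq => // m _; rewrite subn1 /=.
have [k [r [hk hr]]] := IH d hsd hd.
by exists k.+1, r; rewrite hq' hk mulrA -exprS.
Qed.

Lemma idem x : (forall n, ppow mul x n != 0) -> exists e, mul e e = e /\ e != 0.
Proof.
move=> hx.
have [q [hq0 hq]] := exists_rel x.
have [k [r [hqk hr]]] := strip (ltnSn (size q)) hq0.
set r0 := r`_0 in hr.
have hc : (r - r0%:P)`_0 = 0 by rewrite coefB coefC eqxx subrr.
have ht := Xfac hc; set t := drop_poly 1 (r - r0%:P) in ht.
have hrt : r = r0%:P + 'X * t by rewrite -ht addrC subrK.
set u := (- r0^-1) *: t.
set f := 'X * u.
have g1 : ev x ('X^k * (1 - f)) = 0.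
  have -> : 'X^k * (1 - f) = r0^-1 *: ('X^k * r).
    rewrite hrt /f /u -!mul_polyC polyCN.
    have E : r0^-1%:P * r0%:P = 1 :> {poly K} by rewrite -polyCM mulVf.
    rewrite -[X in 'X^k * (X - _)]E; ring.
  by rewrite ev_scale -hqk hq scaler0.
have g2 : ev x ('X^k * (f ^+ k.+1 - 1)) = 0.
  have -> : 'X^k * (f ^+ k.+1 - 1) = 'X^k * (1 - f) * (- \sum_(i < k.+1) f ^+ i).
    rewrite subrX1; ring.
  exact: evZ.
have hfe : f ^+ k.+1 = 'X^(k.+1) * u ^+ k.+1 by rewrite /f exprMn.
exists (ev x ('X^k * u ^+ k.+1)); split.
  apply/eqP; rewrite ev_mul -subr_eq0 -ev_sub.
  have -> : 'X * ('X^k * u ^+ k.+1) * ('X^k * u ^+ k.+1) - 'X^k * u ^+ k.+1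
     = 'X^k * (f ^+ k.+1 - 1) * u ^+ k.+1.
    rewrite hfe !exprS; ring.
  by rewrite evZ.
apply/negP => /eqP he.
have g3 := evZ ('X^(k.+1)) he.
move: (hx k); rewrite -evXk.
have -> : 'X^k = 'X^k * u ^+ k.+1 * 'X^(k.+1) - 'X^k * (f ^+ k.+1 - 1).
  rewrite hfe !exprS; ring.
by rewrite ev_sub g3 g2 subrr eqxx.
Qed.

Lemma Be_zero e : mul e e = e -> forall y, B y e = 0.
Proof.
move=> hee y.
have Cee : C e e = e by rewrite -[RHS]hee mulE Bxx addr0.
set w := B y e.
have H1 : w = C w e + C e w by rewrite /w -{1}Cee Leib.
have H2 : C e w = C e w + C e w.
  rewrite {1}H1 CDr [C w e]CC -CA Cee.
  by [].
have H3 : C e w = 0.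
  by apply: (@addrI _ (C e w)); rewrite addr0 -H2.
by rewrite H1 CC H3 addr0.
Qed.

Definition Le (e : V) (v : V) := mul e v.
Fact Le_lin e : linear (Le e).
Proof. by move=> a u v; rewrite /Le mulDr mulZr. Qed.
HB.instance Definition _ e :=
  GRing.isSemilinear.Build K V V _ (Le e) (GRing.semilinear_linear (Le_lin e)).

Lemma unit_exists : simple_alg mul -> ~ nilalgebra mul -> exists e, is_unit_element mul e.
Proof.
move=> [hsimp _] hnil.
have [x hx] : exists x, forall n, ppow mul x n != 0.
  apply: NNPP => H; apply: hnil => x.
  apply: NNPP => H'; apply: H; exists x => n; apply/eqP => hn; apply: H'; by exists n.
have [e [hee he0]] := idem hx.
have hBe := Be_zero hee.
have hBe' : forall y, B e y = 0 by move=> y; rewrite BN hBe oppr0.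
have hmulC : forall y z, mul (mul e y) z = mul e (mul y z) /\ mul z (mul e y) = mul e (mul z y).
  move=> y z; rewrite !(mulE e) !hBe' !addr0; split.
    rewrite mulE CA (mulE y z) CDr; congr (_ + _).
    by rewrite BN Leib hBe C0l add0r [RHS]CNB.
  rewrite mulE [C z _]CC CA Leib hBe C0l add0r (mulE z y) CDr [C z y]CC.
  by [].
set I := limg (linfun (Le e)).
have memI : forall v, v \in I <-> exists u, v = mul e u.
  move=> v; split.
    by move=> /memv_imgP [u _ ->]; exists u; rewrite lfunE.
  by move=> [u ->]; apply/memv_imgP; exists u; rewrite ?memvf // lfunE.
have hI : two_sided_ideal mul I.
  move=> v y /memI [u ->]; have [a b] := hmulC u y.
  by split; apply/memI; [exists (mul u y) | exists (mul y u)].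
have eI : e \in I by apply/memI; exists e.
have [I0 | If] := hsimp I hI.
  by move: eI he0; rewrite I0 memv0 => ->.
exists e => v.
have [u hu] : exists u, v = mul e u by apply/memI; rewrite If memvf.
have Cee : C e e = e by rewrite -[RHS]hee mulE Bxx addr0.
have hev : mul e v = v.
  by rewrite hu !(mulE e) !hBe' !addr0 -CA Cee.
split => //.
by rewrite mulE CC hBe addr0 -[RHS]hev mulE hBe' addr0.
Qed.
End S.

Unset Implicit Arguments.
Theorem mainTheorem11 (K : fieldType) (V : vectType K) (mul : V -> V -> V) :
  (2%:R : K) != 0 -> (3%:R : K) != 0 ->
  bilinear_prod mul -> admissible_poisson mul ->
  simple_alg mul -> ~ nilalgebra mul ->
  exists e : V, is_unit_element mul e.
Proof. move=> h2 h3 hb ha; exact: unit_exists. Qed.
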